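(* Let $\hat h:\mathbb A\to\mathbb R$ be continuous with $\hat h(x,y+1)=\hat h(x,y)+1$, such that every level set $A_\xi=\hat h^{-1}\{\xi\}$, $\xi\in\mathbb R$, is an essential annular continuum, and put $A^\pm_\xi=\partial\mathcal U^\pm(A_\xi)$. If $A_\xi$ is thin, then, in the Hausdorff metric, $\lim_{\xi'\nearrow\xi}A^-_{\xi'}=\lim_{\xi'\nearrow\xi}A_{\xi'}=A^-_\xi$ and $\lim_{\xi'\searrow\xi}A^+_{\xi'}=\lim_{\xi'\searrow\xi}A_{\xi'}=A^+_\xi$.
   Context: $\mathbb A=\mathbb S^1\times\mathbb R$. An essential annular continuum $A\subset\mathbb A$ is a continuum such that $\mathbb A\setminus A$ consists of exactly two connected components, $\mathcal U^+(A)$ unbounded above and $\mathcal U^-(A)$ unbounded below. Thin means empty interior. Hausdorff distance: $d_{\mathcal H}(C,D)=\max\{\sup_{x\in C}d(x,D),\sup_{y\in D}d(y,C)\}$. *)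

(* Defs.v *)
From Stdlib Require Import Reals List.
Open Scope R_scope.

(* The open annulus A = S^1 x R is modelled as R x R modulo (x,y) ~ (x+1,y).
   Points are pairs (x,y) : R*R, and we use the pseudometric [d] on R*R that
   is the pullback of the metric on A; subsets of A correspond to subsets of
   R*R (all the sets below that matter are saturated). *)
Definition pt := (R * R)%type.
Definition aset := pt -> Prop.

Definition dcirc (x x' : R) : R :=
  Rmin (frac_part (x - x')) (1 - frac_part (x - x')).

Definition d (p q : pt) : R :=
  Rmax (dcirc (fst p) (fst q)) (Rabs (snd p - snd q)).

Definition is_open (U : aset) : Prop :=
  forall p, U p -> exists e, e > 0 /\ forall q, d p q < e -> U q.

Definition compact (S : aset) : Prop :=
  forall (I : Type) (U : I -> aset),
    (forall i, is_open (U i)) ->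
    (forall p, S p -> exists i, U i p) ->
    exists l : list I, forall p, S p -> exists i, In i l /\ U i p.

Definition connected (S : aset) : Prop :=
  ~ exists U V : aset, is_open U /\ is_open V /\
      (forall p, S p -> U p \/ V p) /\
      (exists p, S p /\ U p) /\ (exists p, S p /\ V p) /\
      (forall p, S p -> U p -> V p -> False).

Definition continuum (S : aset) : Prop :=
  (exists p, S p) /\ compact S /\ connected S.

Definition set_eq (S T : aset) : Prop := forall p, S p <-> T p.
Definition subset (S T : aset) : Prop := forall p, S p -> T p.
Definition compl (S : aset) : aset := fun p => ~ S p.

Definition component (X K : aset) : Prop :=
  (exists p, K p) /\ subset K X /\ connected K /\
  forall K', connected K' -> subset K K' -> subset K' X -> subset K' K.

Definition unbounded_above (S : aset) : Prop :=
  forall M, exists p, S p /\ snd p > M.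
Definition unbounded_below (S : aset) : Prop :=
  forall M, exists p, S p /\ snd p < M.

Definition essential_annular_continuum (A : aset) : Prop :=
  continuum A /\
  exists Up Um : aset,
    component (compl A) Up /\ component (compl A) Um /\
    ~ set_eq Up Um /\
    (forall K, component (compl A) K -> set_eq K Up \/ set_eq K Um) /\
    unbounded_above Up /\ unbounded_below Um.

Definition is_Uplus (A U : aset) : Prop :=
  component (compl A) U /\ unbounded_above U.
Definition is_Uminus (A U : aset) : Prop :=
  component (compl A) U /\ unbounded_below U.

Definition boundary (S : aset) : aset := fun p =>
  forall e, e > 0 ->
    (exists q, d p q < e /\ S q) /\ (exists q, d p q < e /\ ~ S q).

Definition Aplus (A : aset) : aset := fun p =>
  exists U, is_Uplus A U /\ boundary U p.
Definition Aminus (A : aset) : aset := fun p =>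
  exists U, is_Uminus A U /\ boundary U p.

Definition thin (A : aset) : Prop :=
  ~ exists p e, e > 0 /\ forall q, d p q < e -> A q.

Definition dist_le (x : pt) (D : aset) (r : R) : Prop :=
  forall r', r' > r -> exists y, D y /\ d x y < r'.

Definition hausdorff_le (C D : aset) (r : R) : Prop :=
  (forall x, C x -> dist_le x D r) /\ (forall y, D y -> dist_le y C r).

Definition hlim_left (F : R -> aset) (xi : R) (L : aset) : Prop :=
  forall eps, eps > 0 -> exists delta, delta > 0 /\
    forall xi', xi - delta < xi' < xi -> hausdorff_le (F xi') L eps.
Definition hlim_right (F : R -> aset) (xi : R) (L : aset) : Prop :=
  forall eps, eps > 0 -> exists delta, delta > 0 /\
    forall xi', xi < xi' < xi + delta -> hausdorff_le (F xi') L eps.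

Definition continuous_on_A (h : pt -> R) : Prop :=
  forall p eps, eps > 0 -> exists delta, delta > 0 /\
    forall q, d p q < delta -> Rabs (h q - h p) < eps.

Definition level (h : pt -> R) (xi : R) : aset := fun p => h p = xi.

(* Main.v *)
Require Import Defs.
From Stdlib Require Import Reals Lra Lia ZArith List Classical ClassicalEpsilon.
From Coquelicot Require Compactness Continuity.
Import Defs.
Open Scope R_scope.


Lemma frac_unique z (n : Z) f : z = IZR n + f -> 0 <= f < 1 -> frac_part z = f.
Proof. intros E H. destruct (Int_part_frac_part_spec z n f H E) as [_ Hf]. auto. Qed.

Lemma frac_range z : 0 <= frac_part z < 1.
Proof. destruct (base_fp z). lra. Qed.

Lemma frac_shift z (n : Z) : frac_part (z + IZR n) = frac_part z.
Proof.
  apply (frac_unique _ (Int_part z + n)%Z). rewrite plus_IZR.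
  pose proof (Rplus_Int_part_frac_part z). lra. apply frac_range.
Qed.

Lemma frac_opp z : frac_part (- z) = frac_part z /\ frac_part z = 0
                \/ frac_part (-z) = 1 - frac_part z.
Proof.
  pose proof (Rplus_Int_part_frac_part z) as E. pose proof (frac_range z).
  destruct (Req_dec (frac_part z) 0) as [H0|H0].
  - left. split; auto. rewrite H0. apply (frac_unique _ (- Int_part z)%Z).
    rewrite opp_IZR. lra. lra.
  - right. apply (frac_unique _ (- Int_part z - 1)%Z).
    rewrite minus_IZR, opp_IZR. lra. lra.
Qed.

Lemma dcirc_shift_l a b (n : Z) : dcirc (a + IZR n) b = dcirc a b.
Proof. unfold dcirc. replace (a + IZR n - b) with ((a - b) + IZR n) by ring.
  rewrite frac_shift. auto. Qed.

Lemma dcirc_shift_r a b (n : Z) : dcirc a (b + IZR n) = dcirc a b.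
Proof. unfold dcirc. replace (a - (b + IZR n)) with ((a - b) + IZR (- n)) by (rewrite opp_IZR; ring).
  rewrite frac_shift. auto. Qed.

Lemma dcirc_sym a b : dcirc a b = dcirc b a.
Proof. unfold dcirc. replace (b - a) with (- (a - b)) by ring.
  destruct (frac_opp (a - b)) as [[E1 E2]|E]; rewrite ?E1, ?E.
  - auto.
  - unfold Rmin. destruct (Rle_dec _ _), (Rle_dec _ _); lra.
Qed.

Lemma dcirc_nonneg a b : 0 <= dcirc a b.
Proof. unfold dcirc. pose proof (frac_range (a - b)). unfold Rmin; destruct (Rle_dec _ _); lra. Qed.

Lemma dcirc_le_abs a b : dcirc a b <= Rabs (a - b).
Proof.
  unfold dcirc. set (z := a - b). pose proof (frac_range z).
  assert (Rmin (frac_part z) (1 - frac_part z) <= frac_part z) by apply Rmin_l.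
  assert (Rmin (frac_part z) (1 - frac_part z) <= 1 - frac_part z) by apply Rmin_r.
  destruct (Rle_dec 1 (Rabs z)) as [|Hn]. lra.
  apply Rnot_le_lt in Hn.
  destruct (Rle_dec 0 z).
  - rewrite Rabs_right by lra.
    assert (frac_part z = z) as F by (apply (frac_unique z 0 z); simpl; [ring|split; [lra|]];
      rewrite Rabs_right in Hn; lra).
    lra.
  - rewrite Rabs_left by lra.
    assert (frac_part z = z + 1) as F by (apply (frac_unique z (-1) (z + 1)); simpl; [ring|];
      rewrite Rabs_left in Hn; lra).
    lra.
Qed.

Lemma dcirc_rep a b : exists n : Z, Rabs (a - (b + IZR n)) = dcirc a b.
Proof.
  unfold dcirc. set (z := a - b). pose proof (frac_range z).
  pose proof (Rplus_Int_part_frac_part z) as E. assert (Hz : z = a - b) by reflexivity.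
  clearbody z.
  destruct (Rle_dec (frac_part z) (1 - frac_part z)).
  - exists (Int_part z). rewrite Rmin_left by lra.
    replace (a - (b + IZR (Int_part z))) with (frac_part z) by lra.
    apply Rabs_right; lra.
  - exists (Int_part z + 1)%Z. rewrite Rmin_right by lra. rewrite plus_IZR.
    replace (a - (b + (IZR (Int_part z) + 1))) with (frac_part z - 1) by lra.
    rewrite Rabs_left by lra. lra.
Qed.

Lemma dcirc_refl a : dcirc a a = 0.
Proof. unfold dcirc. replace (a - a) with 0 by ring. rewrite fp_R0. apply Rmin_left; lra. Qed.

Definition de (p q : pt) : R := Rmax (Rabs (fst p - fst q)) (Rabs (snd p - snd q)).
Definition shx (q : pt) (n : Z) : pt := (fst q + IZR n, snd q).

Lemma d_le_de p q : d p q <= de p q.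
Proof. unfold d, de. pose proof (dcirc_le_abs (fst p) (fst q)).
  apply Rmax_lub. eapply Rle_trans. eauto. apply Rmax_l. apply Rmax_r. Qed.

Lemma d_sym p q : d p q = d q p.
Proof. unfold d. rewrite dcirc_sym. rewrite Rabs_minus_sym. auto. Qed.

Lemma d_refl p : d p p = 0.
Proof. unfold d. rewrite dcirc_refl. replace (snd p - snd p) with 0 by ring.
  rewrite Rabs_R0. apply Rmax_left; lra. Qed.

Lemma d_nonneg p q : 0 <= d p q.
Proof. unfold d. pose proof (dcirc_nonneg (fst p) (fst q)). pose proof (Rmax_l (dcirc (fst p) (fst q)) (Rabs (snd p - snd q))). lra. Qed.

Lemma d_shift_r p q n : d p (shx q n) = d p q.
Proof. unfold d, shx; simpl. rewrite dcirc_shift_r. auto. Qed.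
Lemma d_shift_l p q n : d (shx p n) q = d p q.
Proof. unfold d, shx; simpl. rewrite dcirc_shift_l. auto. Qed.

Lemma d_rep p q : exists n, de p (shx q n) = d p q.
Proof. destruct (dcirc_rep (fst p) (fst q)) as [n Hn]. exists n.
  unfold de, d, shx; simpl. rewrite Hn. auto. Qed.

Lemma de_tri p q r : de p r <= de p q + de q r.
Proof. unfold de.
  pose proof (Rmax_l (Rabs (fst p - fst q)) (Rabs (snd p - snd q))).
  pose proof (Rmax_r (Rabs (fst p - fst q)) (Rabs (snd p - snd q))).
  pose proof (Rmax_l (Rabs (fst q - fst r)) (Rabs (snd q - snd r))).
  pose proof (Rmax_r (Rabs (fst q - fst r)) (Rabs (snd q - snd r))).
  apply Rmax_lub.
  - replace (fst p - fst r) with ((fst p - fst q) + (fst q - fst r)) by ring.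
    pose proof (Rabs_triang (fst p - fst q) (fst q - fst r)). lra.
  - replace (snd p - snd r) with ((snd p - snd q) + (snd q - snd r)) by ring.
    pose proof (Rabs_triang (snd p - snd q) (snd q - snd r)). lra.
Qed.

Lemma d_tri p q r : d p r <= d p q + d q r.
Proof.
  destruct (d_rep p q) as [n Hn]. destruct (d_rep (shx q n) r) as [m Hm].
  rewrite d_shift_l in Hm. rewrite <- Hn, <- Hm.
  rewrite <- (d_shift_r p r m). eapply Rle_trans. apply d_le_de. apply de_tri.
Qed.

Lemma de_ub p q : Rabs (fst p - fst q) <= de p q /\ Rabs (snd p - snd q) <= de p q.
Proof. unfold de. split. apply Rmax_l. apply Rmax_r. Qed.

Lemma dy_le_d p q : Rabs (snd p - snd q) <= d p q.
Proof. unfold d. apply Rmax_r. Qed.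


Lemma h_shiftN (h : pt -> R) (h_wd : forall x y, h (x + 1, y) = h (x, y)) x y k :
  h (x + INR k, y) = h (x, y).
Proof. induction k. simpl. rewrite Rplus_0_r; auto.
  rewrite S_INR. replace (x + (INR k + 1)) with ((x + INR k) + 1) by ring. rewrite h_wd; auto. Qed.

Lemma h_shiftZ (h : pt -> R) (h_wd : forall x y, h (x + 1, y) = h (x, y)) q n :
  h (shx q n) = h q.
Proof. destruct q as [x y]. unfold shx; simpl.
  destruct n as [|p|p]; simpl.
  - rewrite Rplus_0_r; auto.
  - rewrite <- positive_nat_Z, <- INR_IZR_INZ. apply h_shiftN; auto.
  - rewrite <- (h_shiftN h h_wd (x + IZR (Z.neg p)) y (Pos.to_nat p)).
    f_equal. f_equal. rewrite INR_IZR_INZ, positive_nat_Z.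
    replace (Z.neg p) with (- Z.pos p)%Z by reflexivity. rewrite opp_IZR. ring.
Qed.

Lemma h_liftN (h : pt -> R) (h_lift : forall x y, h (x, y + 1) = h (x, y) + 1) x y k :
  h (x, y + INR k) = h (x, y) + INR k.
Proof. induction k. simpl. rewrite !Rplus_0_r; auto.
  rewrite S_INR. replace (y + (INR k + 1)) with ((y + INR k) + 1) by ring. rewrite h_lift, IHk; ring. Qed.

Lemma cont_comp (h : pt -> R) (h_cont : continuous_on_A h) (g : R -> pt) K :
  0 <= K -> (forall s t, de (g s) (g t) <= K * Rabs (s - t)) -> continuity (fun t => h (g t)).
Proof.
  intros HK Hg t0. unfold continuity_pt, continue_in, limit1_in, limit_in. simpl.
  intros eps Heps. destruct (h_cont (g t0) eps Heps) as [del [Hdel Hd]].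
  exists (del / (K + 1)). split. apply Rdiv_lt_0_compat; lra.
  intros t [_ Ht]. unfold R_dist in *. apply Hd.
  eapply Rle_lt_trans. apply d_le_de.
  eapply Rle_lt_trans. apply Hg.
  rewrite Rabs_minus_sym. pose proof (Rabs_pos (t - t0)).
  apply Rle_lt_trans with ((K + 1) * Rabs (t - t0)). nra.
  apply Rmult_lt_reg_r with (/ (K + 1)). apply Rinv_0_lt_compat; lra.
  replace ((K + 1) * Rabs (t - t0) * / (K + 1)) with (Rabs (t - t0)) by (field; lra).
  unfold Rdiv in Ht. nra.
Qed.

Lemma cont_eps (f : R -> R) : continuity f -> forall x eps, eps > 0 ->
  exists a, a > 0 /\ forall y, Rabs (y - x) < a -> Rabs (f y - f x) < eps.
Proof.
  intros Hf x eps He. pose proof (Hf x) as H.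
  unfold continuity_pt, continue_in, limit1_in, limit_in in H. simpl in H.
  destruct (H eps He) as [a [Ha Hy]]. exists a. split; auto. intros y Hyx.
  destruct (Req_dec x y). subst. replace (f y - f y) with 0 by ring. rewrite Rabs_R0; lra.
  apply Hy. split. split. exact I. auto. exact Hyx.
Qed.

Lemma pair_eq (a b : pt) : fst a = fst b -> snd a = snd b -> a = b.
Proof. destruct a, b; simpl; intros; subst; auto. Qed.

Definition seg (p q : pt) (t : R) : pt :=
  (fst p + t * (fst q - fst p), snd p + t * (snd q - snd p)).

Lemma seg_lip p q s t : de (seg p q s) (seg p q t) <= Rabs (s - t) * de p q.
Proof.
  unfold de, seg; simpl. pose proof (Rabs_pos (s - t)).
  pose proof (Rmax_l (Rabs (fst p - fst q)) (Rabs (snd p - snd q))).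
  pose proof (Rmax_r (Rabs (fst p - fst q)) (Rabs (snd p - snd q))).
  apply Rmax_lub.
  - replace (fst p + s * (fst q - fst p) - (fst p + t * (fst q - fst p))) with ((s - t) * - (fst p - fst q)) by ring.
    rewrite Rabs_mult, Rabs_Ropp. apply Rmult_le_compat_l; lra.
  - replace (snd p + s * (snd q - snd p) - (snd p + t * (snd q - snd p))) with ((s - t) * - (snd p - snd q)) by ring.
    rewrite Rabs_mult, Rabs_Ropp. apply Rmult_le_compat_l; lra.
Qed.

Lemma seg0 p q : seg p q 0 = p.
Proof. apply pair_eq; unfold seg; simpl; ring. Qed.
Lemma seg1 p q : seg p q 1 = q.
Proof. apply pair_eq; unfold seg; simpl; ring. Qed.

Lemma de_nonneg p q : 0 <= de p q.
Proof. unfold de. pose proof (Rabs_pos (fst p - fst q)). pose proof (Rmax_l (Rabs (fst p - fst q)) (Rabs (snd p - snd q))). lra. Qed.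

Lemma first_crossing (h : pt -> R) (h_wd : forall x y, h (x + 1, y) = h (x, y))
  (h_cont : continuous_on_A h) p q c :
  h p < c -> c <= h q ->
  exists s, boundary (fun z => h z < c) s /\ d p s <= d p q /\ d q s <= d p q.
Proof.
  intros Hp Hq. destruct (d_rep p q) as [n Hn]. set (q' := shx q n) in *.
  assert (Hq' : h q' = h q) by (apply h_shiftZ; auto).
  set (D := de p q') in *. assert (HD : 0 <= D) by apply de_nonneg.
  set (phi := fun t => h (seg p q' t)).
  assert (Hc : continuity phi).
  { apply (cont_comp h h_cont (seg p q') D HD). intros s t.
    rewrite Rmult_comm. apply seg_lip. }
  set (E := fun l => l <= 1 /\ forall mu, 0 <= mu <= l -> phi mu < c).
  assert (E0 : E 0).
  { split. lra. intros mu Hmu. replace mu with 0 by lra. unfold phi. rewrite seg0. auto. }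
  assert (Eb : bound E). { exists 1. intros l [Hl _]. auto. }
  destruct (completeness E Eb (ex_intro _ 0 E0)) as [m [Hub Hlub]].
  assert (Hm0 : 0 <= m) by (apply Hub; auto).
  assert (Hm1 : m <= 1) by (apply Hlub; intros l [Hl _]; auto).
  assert (HA : forall mu, 0 <= mu < m -> phi mu < c).
  { intros mu Hmu. destruct (classic (exists l, E l /\ mu < l)) as [[l [[_ Hl] Hml]]|Hno].
    - apply Hl. lra.
    - exfalso. assert (m <= mu). apply Hlub. intros l El.
      destruct (Rle_dec l mu); auto. exfalso. apply Hno. exists l. split; auto. lra.
      lra. }
  assert (HB : c <= phi m).
  { destruct (Rle_dec c (phi m)) as [|Hlt]; auto. apply Rnot_le_lt in Hlt. exfalso.
    destruct (cont_eps phi Hc m (c - phi m)) as [a [Ha Hca]]. lra.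
    destruct (Req_dec m 1) as [E1|E1].
    - subst m. unfold phi in Hlt. rewrite seg1 in Hlt. lra.
    - set (l := Rmin 1 (m + a / 2)).
      assert (El : E l).
      { split. apply Rmin_l. intros mu Hmu.
        destruct (Rlt_dec mu m). apply HA; lra.
        assert (l <= m + a/2) by apply Rmin_r.
        specialize (Hca mu). assert (Rabs (mu - m) < a).
        { rewrite Rabs_right; lra. }
        specialize (Hca H0). apply Rabs_def2 in Hca. lra. }
      assert (l <= m) by (apply Hub; auto).
      unfold l in H. unfold Rmin in H. destruct (Rle_dec 1 (m + a/2)); lra. }
  assert (Hm0' : 0 < m).
  { destruct (Req_dec m 0) as [Z|Z]; [|lra]. rewrite Z in HB. unfold phi in HB. rewrite seg0 in HB. lra. }
  exists (seg p q' m). split; [|split].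
  - intros e He. split.
    + set (mu := m - Rmin m (e / (D + 1)) / 2).
      assert (Hmin1 : Rmin m (e / (D + 1)) <= m) by apply Rmin_l.
      assert (Hmin2 : Rmin m (e / (D + 1)) <= e / (D + 1)) by apply Rmin_r.
      assert (Hmin3 : 0 < Rmin m (e / (D + 1))).
      { unfold Rmin; destruct (Rle_dec _ _). lra. apply Rdiv_lt_0_compat; lra. }
      exists (seg p q' mu). split.
      * eapply Rle_lt_trans. apply d_le_de. eapply Rle_lt_trans. apply seg_lip.
        replace (m - mu) with (Rmin m (e / (D + 1)) / 2) by (unfold mu; ring).
        rewrite Rabs_right by lra.
        apply Rle_lt_trans with (e / (D + 1) * D). apply Rmult_le_compat_r; lra.
        apply Rmult_lt_reg_r with (D + 1). lra.
        replace (e / (D + 1) * D * (D + 1)) with (e * D) by (field; lra). nra.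
      * apply HA. unfold mu. lra.
    + exists (seg p q' m). rewrite d_refl. split. auto. unfold phi in HB. lra.
  - rewrite <- Hn. eapply Rle_trans. apply d_le_de. rewrite <- (seg0 p q') at 1.
    eapply Rle_trans. apply seg_lip. replace (0 - m) with (- m) by ring.
    rewrite Rabs_Ropp, Rabs_right by lra. fold D. nra.
  - rewrite <- Hn. rewrite <- (d_shift_l q _ n). fold q'. eapply Rle_trans. apply d_le_de.
    rewrite <- (seg1 p q') at 1.
    eapply Rle_trans. apply seg_lip. rewrite Rabs_right by lra. fold D. nra.
Qed.

Lemma bd_level (h : pt -> R) (h_cont : continuous_on_A h) c s :
  boundary (fun z => h z < c) s -> h s = c.
Proof.
  intros Hb. destruct (Rtotal_order (h s) c) as [Hl|[He|Hg]]; auto; exfalso.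
  - destruct (h_cont s (c - h s)) as [del [Hd Hd']]. lra.
    destruct (Hb del Hd) as [_ [z [Hz1 Hz2]]]. apply Hz2.
    specialize (Hd' z Hz1). apply Rabs_def2 in Hd'. lra.
  - destruct (h_cont s (h s - c)) as [del [Hd Hd']]. lra.
    destruct (Hb del Hd) as [[z [Hz1 Hz2]] _].
    specialize (Hd' z Hz1). apply Rabs_def2 in Hd'. lra.
Qed.


Lemma cont_vert (h : pt -> R) (h_cont : continuous_on_A h) x : continuity (fun t => h (x, t)).
Proof. apply (cont_comp h h_cont (fun t => (x, t)) 1). lra.
  intros s t. unfold de; simpl. replace (x - x) with 0 by ring. rewrite Rabs_R0.
  rewrite Rmult_1_l. apply Rmax_lub. apply Rabs_pos. lra. Qed.

Lemma crossing_up (h : pt -> R) (h_cont : continuous_on_A h)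
  (h_lift : forall x y, h (x, y + 1) = h (x, y) + 1) p c :
  h p <= c -> exists y, snd p <= y /\ h (fst p, y) = c.
Proof.
  intros Hp. destruct (INR_unbounded (c - h p)) as [k Hk].
  destruct (Continuity.IVT_gen (fun t => h (fst p, t)) (snd p) (snd p + INR k) c (cont_vert h h_cont (fst p))) as [y [Hy1 Hy2]].
  - rewrite h_liftN by auto. destruct p as [a b]; simpl.
    rewrite Rmin_left, Rmax_right; lra.
  - exists y. split; auto. rewrite Rmin_left in Hy1 by (pose proof (pos_INR k); lra). lra.
Qed.

Lemma crossing_down (h : pt -> R) (h_cont : continuous_on_A h)
  (h_lift : forall x y, h (x, y + 1) = h (x, y) + 1) p c :
  c <= h p -> exists y, y <= snd p /\ h (fst p, y) = c.
Proof.
  intros Hp. destruct (INR_unbounded (h p - c)) as [k Hk].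
  assert (E : h (fst p, snd p - INR k) = h p - INR k).
  { pose proof (h_liftN h h_lift (fst p) (snd p - INR k) k) as H.
    replace (snd p - INR k + INR k) with (snd p) in H by ring. destruct p; simpl in *. lra. }
  destruct (Continuity.IVT_gen (fun t => h (fst p, t)) (snd p - INR k) (snd p) c (cont_vert h h_cont (fst p))) as [y [Hy1 Hy2]].
  - rewrite E. destruct p as [a b]; simpl in *.
    rewrite Rmin_left, Rmax_right; lra.
  - exists y. split; auto. rewrite Rmax_right in Hy1 by (pose proof (pos_INR k); lra). lra.
Qed.

Lemma abs_between x M : Rabs x <= M -> - M <= x <= M.
Proof. intros H. pose proof (Rle_abs x). pose proof (Rle_abs (- x)). rewrite Rabs_Ropp in *. lra. Qed.

Definition YB (h : pt -> R) := forall c, exists M, forall p, h p = c -> Rabs (snd p) <= M.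

Lemma box_bound (h : pt -> R) (h_cont : continuous_on_A h)
  (h_lift : forall x y, h (x, y + 1) = h (x, y) + 1) (yb : YB h) c :
  exists M, forall p, c - 1 <= h p <= c -> Rabs (snd p) <= M.
Proof.
  destruct (yb c) as [M0 H0]. destruct (yb (c - 1)) as [M1 H1].
  exists (Rmax M0 M1). intros p [Hp1 Hp2]. apply Rabs_le.
  destruct (crossing_up h h_cont h_lift p c Hp2) as [y [Hy1 Hy2]].
  destruct (crossing_down h h_cont h_lift p (c - 1) Hp1) as [y' [Hy1' Hy2']].
  specialize (H0 _ Hy2). specialize (H1 _ Hy2'). simpl in *.
  apply abs_between in H0. apply abs_between in H1.
  pose proof (Rmax_l M0 M1). pose proof (Rmax_r M0 M1). lra.
Qed.

Definition nrm (p : pt) : pt := shx p (- Int_part (fst p)).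

Lemma nrm_box p : 0 <= fst (nrm p) <= 1 /\ snd (nrm p) = snd p.
Proof. unfold nrm, shx; simpl. rewrite opp_IZR. pose proof (base_Int_part (fst p)). split; [lra|auto]. Qed.

Lemma choose_gauge (P : pt -> posreal -> Prop) :
  (forall t, exists del : posreal, P t del) ->
  exists g : R -> R -> posreal, forall u v, P (u, v) (g u v).
Proof.
  intros H. exists (fun u v => proj1_sig (constructive_indefinite_description _ (H (u, v)))).
  intros u v. apply (proj2_sig (constructive_indefinite_description _ (H (u, v)))).
Qed.

Lemma nn_elim (A G : Prop) : ~ ~ A -> (A -> G) -> G.
Proof. intros H1 H2. destruct (classic G); auto. exfalso. apply H1. intro a. auto. Qed.


Lemma d_nrm_l p q : d (nrm p) q = d p q.
Proof. unfold nrm. apply d_shift_l. Qed.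

Lemma h_nrm (h : pt -> R) (h_wd : forall x y, h (x + 1, y) = h (x, y)) p : h (nrm p) = h p.
Proof. unfold nrm. apply h_shiftZ; auto. Qed.

Lemma de_lt p u v e : Rabs (fst p - u) < e -> Rabs (snd p - v) < e -> de p (u, v) < e.
Proof. intros. unfold de; simpl. apply Rmax_lub_lt; auto. Qed.

Lemma C1 (h : pt -> R) (h_wd : forall x y, h (x + 1, y) = h (x, y))
  (h_cont : continuous_on_A h) (h_lift : forall x y, h (x, y + 1) = h (x, y) + 1)
  (yb : YB h) xi eps : eps > 0 ->
  exists del, del > 0 /\ forall p, xi - del < h p < xi ->
    exists s, boundary (fun z => h z < xi) s /\ d p s < eps.
Proof.
  intros He. destruct (box_bound h h_cont h_lift yb xi) as [M HM].
  set (P := fun (t : pt) (del : posreal) => del <= eps / 2 /\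
     (xi <= h t \/ (del <= xi - h t /\ forall q, d t q < del -> Rabs (h q - h t) < (xi - h t) / 2))).
  assert (Hex : forall t, exists del : posreal, P t del).
  { intros t. destruct (Rle_dec xi (h t)) as [Hl|Hl].
    - assert (eps / 2 > 0) by lra. exists (mkposreal _ H). split; simpl; lra.
    - apply Rnot_le_lt in Hl. destruct (h_cont t ((xi - h t) / 2)) as [r [Hr Hr']]. lra.
      assert (0 < Rmin (eps / 2) (Rmin r (xi - h t))).
      { repeat apply Rmin_glb_lt; lra. }
      exists (mkposreal _ H). simpl. split. apply Rmin_l. right. split.
      eapply Rle_trans. apply Rmin_r. apply Rmin_r.
      intros q Hq. apply Hr'. eapply Rlt_le_trans. apply Hq.
      eapply Rle_trans. apply Rmin_r. apply Rmin_l. }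
  destruct (choose_gauge P Hex) as [g Hg].
  destruct (Compactness.compactness_value_2d 0 1 (- M) M g) as [d0 Hd0].
  exists (Rmin (d0 / 2) 1). split. apply Rmin_glb_lt. pose proof (cond_pos d0); lra. lra.
  intros p [Hp1 Hp2].
  assert (Hm1 : Rmin (d0 / 2) 1 <= d0 / 2) by apply Rmin_l.
  assert (Hm2 : Rmin (d0 / 2) 1 <= 1) by apply Rmin_r.
  destruct (nrm_box p) as [Hb1 Hb2].
  assert (Hy : Rabs (snd p) <= M) by (apply HM; lra).
  apply abs_between in Hy.
  apply (nn_elim _ _ (Hd0 (fst (nrm p)) (snd (nrm p)) Hb1 ltac:(lra))).
  intros [u [v [_ [_ [Hu [Hv Hd]]]]]].
  destruct (Hg u v) as [Hg1 [Hg2|[Hg2 Hg3]]].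
  - destruct (first_crossing h h_wd h_cont (nrm p) (u, v) xi) as [s [Hs1 [Hs2 _]]].
    rewrite h_nrm; auto. lra. auto.
    exists s. split; auto. rewrite <- d_nrm_l.
    assert (d (nrm p) (u, v) < g u v).
    { eapply Rle_lt_trans. apply d_le_de. apply de_lt; auto. }
    lra.
  - exfalso. assert (Hq : d (u, v) (nrm p) < g u v).
    { rewrite d_sym. eapply Rle_lt_trans. apply d_le_de. apply de_lt; auto. }
    specialize (Hg3 _ Hq). rewrite h_nrm in Hg3 by auto. apply Rabs_def2 in Hg3.
    lra.
Qed.

Lemma C2 (h : pt -> R) (h_wd : forall x y, h (x + 1, y) = h (x, y))
  (h_cont : continuous_on_A h) (h_lift : forall x y, h (x, y + 1) = h (x, y) + 1)
  (yb : YB h) xi eps : eps > 0 ->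
  exists del, del > 0 /\ forall q, boundary (fun z => h z < xi) q ->
    exists r, d q r < eps /\ h r <= xi - del.
Proof.
  intros He. destruct (box_bound h h_cont h_lift yb xi) as [M HM].
  set (P := fun (t : pt) (del : posreal) => del <= eps / 4 /\
     ((exists r, h r <= xi - del /\ forall q, de q t < del -> d q r < eps) \/
      (forall r, d t r < eps / 2 -> xi <= h r))).
  assert (Hex : forall t, exists del : posreal, P t del).
  { intros t. destruct (classic (exists r, d t r < eps / 2 /\ h r < xi)) as [[r [Hr1 Hr2]]|Hno].
    - assert (0 < Rmin (eps / 4) (xi - h r)) by (apply Rmin_glb_lt; lra).
      exists (mkposreal _ H). simpl. split. apply Rmin_l. left. exists r. split.
      pose proof (Rmin_r (eps / 4) (xi - h r)). cbn [pos]. lra.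
      intros q Hq. cbn [pos] in Hq. pose proof (Rmin_l (eps / 4) (xi - h r)).
      pose proof (d_tri q t r). pose proof (d_le_de q t). lra.
    - assert (eps / 4 > 0) by lra. exists (mkposreal _ H). split. cbn [pos]; lra. right. cbn [pos] in *.
      intros r Hr. destruct (Rle_dec xi (h r)) as [|Hn]; auto. exfalso. apply Hno.
      exists r. split; auto. lra. }
  destruct (choose_gauge P Hex) as [g Hg].
  destruct (Compactness.compactness_value_2d 0 1 (- M) M g) as [d0 Hd0].
  exists d0. split. apply cond_pos.
  intros q Hq. pose proof (bd_level h h_cont xi q Hq) as Hql.
  destruct (nrm_box q) as [Hb1 Hb2].
  assert (Hy : Rabs (snd q) <= M) by (apply HM; lra).
  apply abs_between in Hy.
  apply (nn_elim _ _ (Hd0 (fst (nrm q)) (snd (nrm q)) Hb1 ltac:(lra))).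
  intros [u [v [_ [_ [Hu [Hv Hd]]]]]].
  assert (Hde : de (nrm q) (u, v) < g u v) by (apply de_lt; auto).
  destruct (Hg u v) as [Hg1 [[r [Hr1 Hr2]]|Hg2]].
  - exists r. split. rewrite <- d_nrm_l. apply Hr2; auto. lra.
  - exfalso. assert (eps / 4 > 0) by lra. destruct (Hq _ H) as [[z [Hz1 Hz2]] _].
    assert (d (u, v) z < eps / 2).
    { pose proof (d_tri (u, v) (nrm q) z). rewrite d_nrm_l in H0.
      rewrite (d_sym (u, v) (nrm q)) in H0. pose proof (d_le_de (nrm q) (u, v)). lra. }
    specialize (Hg2 _ H0). lra.
Qed.

Lemma core_left (h : pt -> R) (h_wd : forall x y, h (x + 1, y) = h (x, y))
  (h_cont : continuous_on_A h) (h_lift : forall x y, h (x, y + 1) = h (x, y) + 1)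
  (yb : YB h) xi :
  hlim_left (fun c => boundary (fun z => h z < c)) xi (boundary (fun z => h z < xi)) /\
  hlim_left (fun c => level h c) xi (boundary (fun z => h z < xi)).
Proof.
  assert (Main : forall eps, eps > 0 -> exists del, del > 0 /\ forall xi', xi - del < xi' < xi ->
     (forall x, h x = xi' -> dist_le x (boundary (fun z => h z < xi)) eps) /\
     (forall y, boundary (fun z => h z < xi) y ->
        exists s, boundary (fun z => h z < xi') s /\ d y s < eps)).
  { intros eps He.
    destruct (C1 h h_wd h_cont h_lift yb xi eps He) as [d1 [Hd1 H1]].
    destruct (C2 h h_wd h_cont h_lift yb xi eps He) as [d2 [Hd2 H2]].
    exists (Rmin d1 d2). split. apply Rmin_glb_lt; auto.
    intros xi' Hxi'. pose proof (Rmin_l d1 d2). pose proof (Rmin_r d1 d2). split.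
    - intros x Hx. destruct (H1 x) as [s [Hs1 Hs2]]. lra.
      intros r' Hr'. exists s. split; auto. lra.
    - intros y Hy. destruct (H2 y Hy) as [r [Hr1 Hr2]].
      pose proof (bd_level h h_cont xi y Hy).
      destruct (first_crossing h h_wd h_cont r y xi') as [s [Hs1 [_ Hs2]]]. lra. lra.
      exists s. split; auto. rewrite d_sym in Hr1. lra. }
  split.
  - intros eps He. destruct (Main eps He) as [del [Hdel HM]]. exists del. split; auto.
    intros xi' Hxi'. destruct (HM xi' Hxi') as [Ha Hb]. split.
    + intros x Hx. apply Ha. apply bd_level; auto.
    + intros y Hy r' Hr'. destruct (Hb y Hy) as [s [Hs1 Hs2]]. exists s. split; auto. lra.
  - intros eps He. destruct (Main eps He) as [del [Hdel HM]]. exists del. split; auto.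
    intros xi' Hxi'. destruct (HM xi' Hxi') as [Ha Hb]. split.
    + intros x Hx. apply Ha. auto.
    + intros y Hy r' Hr'. destruct (Hb y Hy) as [s [Hs1 Hs2]]. exists s. split.
      unfold level. apply bd_level; auto. lra.
Qed.


Lemma list_max (l : list nat) : exists N, forall i, In i l -> (i <= N)%nat.
Proof. induction l as [|a l [N HN]]. exists 0%nat. intros i [].
  exists (Nat.max a N). intros i [->|Hi]. lia. specialize (HN i Hi). lia. Qed.

Lemma yb_of_compact (h : pt -> R) : (forall c, compact (level h c)) -> YB h.
Proof.
  intros Hc c. destruct (Hc c nat (fun n q => Rabs (snd q) < INR n)) as [l Hl].
  - intros n p Hp. exists (INR n - Rabs (snd p)). split. lra.
    intros q Hq. pose proof (dy_le_d p q).
    pose proof (Rabs_triang (snd q - snd p) (snd p)).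
    replace (snd q - snd p + snd p) with (snd q) in H0 by ring.
    rewrite Rabs_minus_sym in H. lra.
  - intros p _. destruct (INR_unbounded (Rabs (snd p))) as [n Hn]. exists n. lra.
  - destruct (list_max l) as [N HN]. exists (INR N). intros p Hp.
    destruct (Hl p Hp) as [i [Hi1 Hi2]]. specialize (HN i Hi1).
    apply le_INR in HN. lra.
Qed.

Lemma open_lt (h : pt -> R) (h_cont : continuous_on_A h) c : is_open (fun z => h z < c).
Proof. intros p Hp. destruct (h_cont p (c - h p)) as [del [Hd Hd']]. lra.
  exists del. split; auto. intros q Hq. specialize (Hd' q Hq). apply Rabs_def2 in Hd'. lra. Qed.

Lemma open_gt (h : pt -> R) (h_cont : continuous_on_A h) c : is_open (fun z => h z > c).
Proof. intros p Hp. destruct (h_cont p (h p - c)) as [del [Hd Hd']]. lra.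
  exists del. split; auto. intros q Hq. specialize (Hd' q Hq). apply Rabs_def2 in Hd'. lra. Qed.

Lemma conn_sign (h : pt -> R) (h_cont : continuous_on_A h) c K :
  connected K -> (forall p, K p -> h p <> c) ->
  forall p q, K p -> K q -> h p < c -> h q < c.
Proof.
  intros Hk Hne p q Kp Kq Hp. destruct (Rlt_dec (h q) c) as [|Hq]; auto. exfalso.
  apply Hk. exists (fun z => h z < c), (fun z => h z > c).
  split. apply open_lt; auto. split. apply open_gt; auto.
  split. intros z Kz. specialize (Hne z Kz). destruct (Rtotal_order (h z) c) as [|[|]]; auto. tauto.
  split. exists p; auto. split. exists q. split; auto. specialize (Hne q Kq). lra.
  intros z _ H1 H2. lra.
Qed.

Lemma comp_exists (X : aset) p : X p -> exists K, component X K /\ K p.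
Proof.
  intros Xp. set (K := fun z => exists C, connected C /\ subset C X /\ C p /\ C z).
  assert (Hsing : connected (fun z => z = p)).
  { intros [U [V [_ [_ [_ [[a [Ha1 Ha2]] [[b [Hb1 Hb2]] Hd]]]]]]]. subst.
    apply (Hd p eq_refl Ha2 Hb2). }
  assert (Kp : K p).
  { exists (fun z => z = p). split; auto. split. intros z ->; auto. split; auto. }
  exists K. split; auto. split. exists p; auto. split.
  { intros z [C [_ [HC [_ Cz]]]]. auto. }
  split.
  - intros [U [V [HU [HV [Hcov [[a [Ka Ua]] [[b [Kb Vb]] Hd]]]]]]].
    destruct (Hcov p Kp) as [Up|Vp].
    + destruct Kb as [C [HC [HCX [Cp Cb]]]]. apply HC. exists U, V.
      split; auto. split; auto. split.
      { intros z Cz. apply Hcov. exists C; auto. }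
      split. exists p; auto. split. exists b; auto.
      intros z Cz. apply Hd. exists C; auto.
    + destruct Ka as [C [HC [HCX [Cp Ca]]]]. apply HC. exists U, V.
      split; auto. split; auto. split.
      { intros z Cz. apply Hcov. exists C; auto. }
      split. exists a; auto. split. exists p; auto.
      intros z Cz. apply Hd. exists C; auto.
  - intros K' HK' Hsub HX z K'z. exists K'. split; auto.
Qed.


Lemma above_gt (h : pt -> R) (h_cont : continuous_on_A h)
  (h_lift : forall x y, h (x, y + 1) = h (x, y) + 1) (yb : YB h) c S :
  connected S -> subset S (compl (level h c)) -> unbounded_above S ->
  forall q, S q -> h q > c.
Proof.
  intros Hc Hs Hu q Sq. destruct (yb c) as [M HM]. destruct (Hu M) as [p [Sp Hp]].
  assert (Hne : forall z, S z -> h z <> c) by (intros z Sz E; apply (Hs z Sz); exact E).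
  assert (Hpc : h p > c).
  { destruct (Rtotal_order (h p) c) as [Hl|[He|]]; auto; [|exfalso; apply (Hne p Sp He)].
    exfalso. destruct (crossing_up h h_cont h_lift p c) as [y [Hy1 Hy2]]. lra.
    specialize (HM _ Hy2). simpl in HM. apply abs_between in HM. lra. }
  destruct (Rtotal_order (h q) c) as [Hl|[He|]]; auto; exfalso.
  - pose proof (conn_sign h h_cont c S Hc Hne q p Sq Sp Hl). lra.
  - apply (Hne q Sq He).
Qed.

Lemma below_lt (h : pt -> R) (h_cont : continuous_on_A h)
  (h_lift : forall x y, h (x, y + 1) = h (x, y) + 1) (yb : YB h) c S :
  connected S -> subset S (compl (level h c)) -> unbounded_below S ->
  forall q, S q -> h q < c.
Proof.
  intros Hc Hs Hu q Sq. destruct (yb c) as [M HM]. destruct (Hu (- M)) as [p [Sp Hp]].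
  assert (Hne : forall z, S z -> h z <> c) by (intros z Sz E; apply (Hs z Sz); exact E).
  assert (Hpc : h p < c).
  { destruct (Rtotal_order (h p) c) as [Hl|[He|Hg]]; auto; [exfalso; apply (Hne p Sp He)|].
    exfalso. destruct (crossing_down h h_cont h_lift p c) as [y [Hy1 Hy2]]. lra.
    specialize (HM _ Hy2). simpl in HM. apply abs_between in HM. lra. }
  apply (conn_sign h h_cont c S Hc Hne p q Sp Sq Hpc).
Qed.

Lemma Uminus_eq (h : pt -> R) (h_cont : continuous_on_A h)
  (h_lift : forall x y, h (x, y + 1) = h (x, y) + 1) (yb : YB h) c
  (Hess : essential_annular_continuum (level h c)) U :
  is_Uminus (level h c) U -> set_eq U (fun z => h z < c).
Proof.
  intros [HUcomp HUb]. destruct HUcomp as [[u Uu] [HUs [HUc HUm]]] eqn:EU.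
  destruct Hess as [_ [Up [Um [[_ [HpS [HpC _]]] [[_ [HmS [HmC _]]] [_ [Hall [Hpa Hmb]]]]]]]].
  assert (HU : forall q, U q -> h q < c) by (apply (below_lt h h_cont h_lift yb c U); auto).
  assert (HP : forall q, Up q -> h q > c) by (apply (above_gt h h_cont h_lift yb c Up); auto).
  assert (UUm : set_eq U Um).
  { destruct (Hall U HUcomp) as [E|E]; auto.
    exfalso. specialize (HU u Uu). specialize (HP u (proj1 (E u) Uu)). lra. }
  intros p. split. apply HU. intros Hp.
  destruct (comp_exists (compl (level h c)) p) as [K [HK Kp]].
  { unfold compl, level. lra. }
  destruct (Hall K HK) as [E|E].
  - exfalso. specialize (HP p (proj1 (E p) Kp)). lra.
  - apply UUm. apply E. auto.
Qed.

Lemma Uplus_eq (h : pt -> R) (h_cont : continuous_on_A h)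
  (h_lift : forall x y, h (x, y + 1) = h (x, y) + 1) (yb : YB h) c
  (Hess : essential_annular_continuum (level h c)) U :
  is_Uplus (level h c) U -> set_eq U (fun z => h z > c).
Proof.
  intros [HUcomp HUb]. destruct HUcomp as [[u Uu] [HUs [HUc HUm]]] eqn:EU.
  destruct Hess as [_ [Up [Um [[_ [HpS [HpC _]]] [[_ [HmS [HmC _]]] [_ [Hall [Hpa Hmb]]]]]]]].
  assert (HU : forall q, U q -> h q > c) by (apply (above_gt h h_cont h_lift yb c U); auto).
  assert (HM : forall q, Um q -> h q < c) by (apply (below_lt h h_cont h_lift yb c Um); auto).
  assert (UUp : set_eq U Up).
  { destruct (Hall U HUcomp) as [E|E]; auto.
    exfalso. specialize (HU u Uu). specialize (HM u (proj1 (E u) Uu)). lra. }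
  intros p. split. apply HU. intros Hp.
  destruct (comp_exists (compl (level h c)) p) as [K [HK Kp]].
  { unfold compl, level. lra. }
  destruct (Hall K HK) as [E|E].
  - apply UUp. apply E. auto.
  - exfalso. specialize (HM p (proj1 (E p) Kp)). lra.
Qed.

Lemma boundary_ext (S T : aset) p : (forall z, S z <-> T z) -> boundary S p -> boundary T p.
Proof. intros E Hb e He. destruct (Hb e He) as [[q [Hq1 Hq2]] [r [Hr1 Hr2]]].
  split. exists q. split; auto. apply E; auto. exists r. split; auto. rewrite <- E; auto. Qed.

Lemma Aminus_eq (h : pt -> R) (h_cont : continuous_on_A h)
  (h_lift : forall x y, h (x, y + 1) = h (x, y) + 1) (yb : YB h) c
  (Hess : essential_annular_continuum (level h c)) p :
  Aminus (level h c) p <-> boundary (fun z => h z < c) p.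
Proof.
  split.
  - intros [U [HU Hb]]. apply (boundary_ext U). apply (Uminus_eq h h_cont h_lift yb c Hess U HU). auto.
  - intros Hb. pose proof Hess as Hess'.
    destruct Hess' as [_ [Up [Um [_ [HUm [_ [_ [_ Hmb]]]]]]]].
    assert (HU : is_Uminus (level h c) Um) by (split; auto).
    exists Um. split; auto. apply (boundary_ext (fun z => h z < c)); auto.
    intros z. symmetry. apply (Uminus_eq h h_cont h_lift yb c Hess Um HU).
Qed.

Lemma Aplus_eq (h : pt -> R) (h_cont : continuous_on_A h)
  (h_lift : forall x y, h (x, y + 1) = h (x, y) + 1) (yb : YB h) c
  (Hess : essential_annular_continuum (level h c)) p :
  Aplus (level h c) p <-> boundary (fun z => h z > c) p.
Proof.
  split.
  - intros [U [HU Hb]]. apply (boundary_ext U). apply (Uplus_eq h h_cont h_lift yb c Hess U HU). auto.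
  - intros Hb. pose proof Hess as Hess'.
    destruct Hess' as [_ [Up [Um [HUp [_ [_ [_ [Hpa _]]]]]]]].
    assert (HU : is_Uplus (level h c) Up) by (split; auto).
    exists Up. split; auto. apply (boundary_ext (fun z => h z > c)); auto.
    intros z. symmetry. apply (Uplus_eq h h_cont h_lift yb c Hess Up HU).
Qed.

Definition rf (p : pt) : pt := (fst p, - snd p).

Lemma rf_rf p : rf (rf p) = p.
Proof. apply pair_eq; unfold rf; simpl; ring. Qed.

Lemma d_rf p q : d (rf p) (rf q) = d p q.
Proof. unfold d, rf; simpl. f_equal. replace (- snd p - - snd q) with (- (snd p - snd q)) by ring.
  apply Rabs_Ropp. Qed.

Lemma bd_rf (S T : aset) : (forall z, S z <-> T (rf z)) -> forall p, boundary S p <-> boundary T (rf p).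
Proof.
  intros E p. split.
  - intros Hb e He. destruct (Hb e He) as [[q [Hq1 Hq2]] [r [Hr1 Hr2]]]. split.
    + exists (rf q). rewrite d_rf. split; auto. apply E; auto.
    + exists (rf r). rewrite d_rf. split; auto. rewrite <- E; auto.
  - intros Hb e He. destruct (Hb e He) as [[q [Hq1 Hq2]] [r [Hr1 Hr2]]]. split.
    + exists (rf q). rewrite <- d_rf, rf_rf. split; auto. apply E. rewrite rf_rf; auto.
    + exists (rf r). rewrite <- d_rf, rf_rf. split; auto. rewrite E, rf_rf; auto.
Qed.

Lemma haus_rf (S T S' T' : aset) e :
  (forall z, S z <-> S' (rf z)) -> (forall z, T z <-> T' (rf z)) ->
  hausdorff_le S T e -> hausdorff_le S' T' e.
Proof.
  intros ES ET [H1 H2]. split.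
  - intros x Hx r' Hr'. destruct (H1 (rf x)) with r' as [y [Ty Hy]]; auto.
    apply ES. rewrite rf_rf; auto.
    exists (rf y). split. apply ET; auto. rewrite <- d_rf, rf_rf. auto.
  - intros x Hx r' Hr'. destruct (H2 (rf x)) with r' as [y [Ty Hy]]; auto.
    apply ET. rewrite rf_rf; auto.
    exists (rf y). split. apply ES; auto. rewrite <- d_rf, rf_rf. auto.
Qed.

Lemma haus_ext (S T S' T' : aset) e :
  (forall z, S z <-> S' z) -> (forall z, T z <-> T' z) ->
  hausdorff_le S T e -> hausdorff_le S' T' e.
Proof.
  intros ES ET [H1 H2]. split.
  - intros x Hx r' Hr'. destruct (H1 x) with r' as [y [Ty Hy]]; auto. apply ES; auto.
    exists y. split; auto. apply ET; auto.
  - intros x Hx r' Hr'. destruct (H2 x) with r' as [y [Ty Hy]]; auto. apply ET; auto.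
    exists y. split; auto. apply ES; auto.
Qed.


Theorem mainTheorem14 (h : pt -> R)
  (h_wd : forall x y, h (x + 1, y) = h (x, y))
  (h_cont : continuous_on_A h)
  (h_lift : forall x y, h (x, y + 1) = h (x, y) + 1)
  (h_ess : forall xi, essential_annular_continuum (level h xi))
  (xi : R)
  (h_thin : thin (level h xi)) :
  hlim_left (fun xi' => Aminus (level h xi')) xi (Aminus (level h xi)) /\
  hlim_left (fun xi' => level h xi') xi (Aminus (level h xi)) /\
  hlim_right (fun xi' => Aplus (level h xi')) xi (Aplus (level h xi)) /\
  hlim_right (fun xi' => level h xi') xi (Aplus (level h xi)).
Proof.
  assert (yb : YB h).
  { apply yb_of_compact. intros c. destruct (h_ess c) as [[_ [Hc _]] _]. exact Hc. }
  set (g := fun p : pt => - h (rf p)).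
  assert (g_wd : forall x y, g (x + 1, y) = g (x, y)).
  { intros x y. unfold g, rf; simpl. rewrite h_wd. auto. }
  assert (g_lift : forall x y, g (x, y + 1) = g (x, y) + 1).
  { intros x y. unfold g, rf; simpl. pose proof (h_lift x (- (y + 1))) as H.
    replace (- (y + 1) + 1) with (- y) in H by ring. lra. }
  assert (g_cont : continuous_on_A g).
  { intros p eps He. destruct (h_cont (rf p) eps He) as [del [Hd Hd']]. exists del. split; auto.
    intros q Hq. unfold g. rewrite <- d_rf in Hq. specialize (Hd' _ Hq).
    replace (- h (rf q) - - h (rf p)) with (- (h (rf q) - h (rf p))) by ring.
    rewrite Rabs_Ropp. auto. }
  assert (g_yb : YB g).
  { intros c. destruct (yb (- c)) as [M HM]. exists M. intros p Hp.
    unfold g in Hp. specialize (HM (rf p) ltac:(lra)). unfold rf in HM; simpl in HM.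
    rewrite Rabs_Ropp in HM. auto. }
  destruct (core_left h h_wd h_cont h_lift yb xi) as [L1 L2].
  destruct (core_left g g_wd g_cont g_lift g_yb (- xi)) as [R1 R2].
  assert (AM : forall c p, Aminus (level h c) p <-> boundary (fun z => h z < c) p)
    by (intros; apply Aminus_eq; auto).
  assert (AP : forall c p, Aplus (level h c) p <-> boundary (fun z => h z > c) p)
    by (intros; apply Aplus_eq; auto).
  assert (BG : forall c z, boundary (fun z => g z < - c) z <-> Aplus (level h c) (rf z)).
  { intros c z. rewrite AP. apply bd_rf. intros w. unfold g. split; intros; lra. }
  split; [|split; [|split]].
  - intros eps He. destruct (L1 eps He) as [del [Hd H]]. exists del. split; auto.
    intros xi' Hx. eapply haus_ext; [| |apply (H xi' Hx)]; intros z; symmetry; apply AM.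
  - intros eps He. destruct (L2 eps He) as [del [Hd H]]. exists del. split; auto.
    intros xi' Hx. eapply haus_ext; [| |apply (H xi' Hx)]; intros z. tauto. symmetry; apply AM.
  - intros eps He. destruct (R1 eps He) as [del [Hd H]]. exists del. split; auto.
    intros xi' Hx. specialize (H (- xi') ltac:(lra)).
    eapply haus_rf; [| |apply H]; intros z; simpl.
    apply BG. apply BG.
  - intros eps He. destruct (R2 eps He) as [del [Hd H]]. exists del. split; auto.
    intros xi' Hx. specialize (H (- xi') ltac:(lra)).
    eapply haus_rf; [| |apply H]; intros z; simpl.
    unfold level, g. split; intros; lra. apply BG.
Qed.
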